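(* Let $p$ be the density of the centred Gaussian $\mathcal N(0,\Sigma)$ on $\mathbb{R}^d$ with $\Sigma$ positive definite. Let $\tau>0$, $y\in\mathbb{R}^d$, and define $x_0=y$ and $x_{k+1}=\alpha_k\,\mathrm{MMSE}_{\sigma_k}(x_k)+(1-\alpha_k)y$ with $\alpha_k=\frac{k+1}{k+2}$, $\sigma_k^2=\frac{\tau}{k+1}$. Then for all $k\ge0$, $$x_k-\mathrm{prox}_{-\tau\ln p}(y)=\frac{y-\mathrm{prox}_{-\tau\ln p}(y)}{k+1}.$$
   Context: For $\sigma>0$, $\mathrm{MMSE}_\sigma(z):=\mathbb{E}[X\mid X+\sigma\varepsilon=z]$ where $X\sim p$ and $\varepsilon\sim\mathcal N(0,I_d)$ are independent. $\mathrm{prox}_{-\tau\ln p}(y):=\arg\min_x\{\tfrac12\|y-x\|^2-\tau\ln p(x)\}$, which here equals $(I+\tau\Sigma^{-1})^{-1}y$. *)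

(* Defs.v *)
From HB Require Import structures.
From mathcomp Require Import all_boot all_order all_algebra.
From mathcomp Require Import all_classical all_reals all_analysis.
Set Implicit Arguments. Unset Strict Implicit. Unset Printing Implicit Defensive.
Import Order.TTheory GRing.Theory Num.Theory.
Local Open Scope classical_set_scope.
Local Open Scope ring_scope.

Section Defs.
Variable R : realType.

(* Iterated Lebesgue integral over R^n: coordinates are functions nat -> R,
   only coordinates 0..n-1 matter.
   iint n f = \int dx_{n-1} ... \int dx_0 f(x). *)
Fixpoint iint (n : nat) (f : (nat -> R) -> R) : R :=
  match n with
  | 0 => f (fun _ => 0)
  | n'.+1 => Rintegral (@lebesgue_measure R) setT
      (fun t => iint n' (fun v => f (fun i => if i == n' then t else v i)))
  end.

Definition intRd (d : nat) (g : 'cV[R]_d -> R) : R :=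
  iint d (fun v => g (\col_(i < d) v (nat_of_ord i))).

Definition posdef (d : nat) (S : 'M[R]_d) : Prop :=
  S^T = S /\ forall x : 'cV[R]_d, x != 0 -> 0 < (x^T *m S *m x) 0 0.

Definition sqnorm (d : nat) (x : 'cV[R]_d) : R := \sum_(i < d) x i 0 ^+ 2.

Definition gauss_density (d : nat) (S : 'M[R]_d) (x : 'cV[R]_d) : R :=
  (Num.sqrt (((2 * pi) ^+ d) * \det S))^-1 *
    expR (- (x^T *m invmx S *m x) 0 0 / 2).

Definition noise_density (d : nat) (sigma : R) (e : 'cV[R]_d) : R :=
  (Num.sqrt ((2 * pi * sigma ^+ 2) ^+ d))^-1 *
    expR (- sqnorm e / (2 * sigma ^+ 2)).

(* MMSE_sigma(z) = E[X | X + sigma eps = z], X ~ p (density), eps ~ N(0,I):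
   posterior mean computed from the joint density p(x) * phi_sigma(z - x). *)
Definition MMSE (d : nat) (p : 'cV[R]_d -> R) (sigma : R) (z : 'cV[R]_d)
  : 'cV[R]_d :=
  \col_(i < d)
    (intRd (fun x => x i 0 * p x * noise_density sigma (z - x)) /
     intRd (fun x => p x * noise_density sigma (z - x))).

(* prox_{-tau ln p}(y) := argmin_x { 1/2 ||y - x||^2 - tau ln p(x) }
   (the minimizer, chosen by xget; it exists and is unique here). *)
Definition prox_neglog (d : nat) (p : 'cV[R]_d -> R) (tau : R) (y : 'cV[R]_d)
  : 'cV[R]_d :=
  xget 0 [set x | forall x' : 'cV[R]_d,
     sqnorm (y - x) / 2 - tau * ln (p x) <= sqnorm (y - x') / 2 - tau * ln (p x')].

Definition alpha (k : nat) : R := k.+1%:R / k.+2%:R.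
Definition sigma_k (tau : R) (k : nat) : R := Num.sqrt (tau / k.+1%:R).

Fixpoint xseq (d : nat) (p : 'cV[R]_d -> R) (tau : R) (y : 'cV[R]_d) (k : nat)
  : 'cV[R]_d :=
  match k with
  | 0 => y
  | k'.+1 => alpha k' *: MMSE p (sigma_k tau k') (xseq p tau y k')
             + (1 - alpha k') *: y
  end.

End Defs.

(* Main.v *)
Require Import Defs.
From HB Require Import structures.
From mathcomp Require Import all_boot all_order all_algebra.
From mathcomp Require Import all_classical all_reals all_analysis.
From mathcomp Require Import ring lra.
From mathcomp Require Import measurable_realfun.
Import Order.TTheory GRing.Theory Num.Theory.
Import numFieldNormedType.Exports.
Local Open Scope classical_set_scope.
Local Open Scope ring_scope.

Section G4.
Variable R : realType.
Notation mu := (@lebesgue_measure R).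



Lemma derive1_addc (c : R) : (fun x : R => x + c)^`()%classic = cst 1.
Proof.
apply/funext => x; rewrite derive1E deriveD// derive_id derive_cst addr0 //.
Qed.

Lemma shift_integral (G : R -> R) (c : R) : continuous G -> (forall x, 0 <= G x) ->
 (\int[mu]_x (G (x + c))%:E = \int[mu]_x (G x)%:E)%E.
Proof.
move=> cG G0.
rewrite (@increasing_ge0_integration_by_substitutionT _ (fun x => x + c) G) //.
- by apply: eq_integral => x _; rewrite derive1_addc /= mulr1.
- by move=> x y xy; rewrite ltrD2r.
- by rewrite derive1_addc; exact: cst_continuous.
- by rewrite derive1_addc; exact: is_cvg_cst.
- by rewrite derive1_addc; exact: is_cvg_cst.
- exact: cvg_addrr_Ny.
- exact: cvg_addrr.
Qed.



Lemma refl_integral (G : R -> R) : continuous G -> (forall x, 0 <= G x) ->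
  (forall x, x < 0 -> G x = 0) ->
 (\int[mu]_x (G (- x))%:E = \int[mu]_x (G x)%:E)%E.
Proof.
move=> cG G0 Gn.
have := @ge0_integration_by_substitutionNy R (fun x => G (- x)) 0.
rewrite oppr0 => H.
transitivity (\int[mu]_(x in `]-oo, 0%R]) (G (- x))%:E)%E.
  rewrite [RHS]integral_mkcond; apply: eq_integral => x _ /=; rewrite /patch /=.
  case: ifPn => // xin.
  move: xin; rewrite notin_setE /= in_itv /= => /negP; rewrite -ltNge => x0.
  by rewrite Gn // oppr_lt0.
rewrite H; last 2 first.
- apply: continuous_subspaceT => x.
  apply: (continuous_comp (f := -%R)); [exact: oppr_continuous | exact: cG].
- by move=> x _; exact: G0.
rewrite [LHS]integral_mkcond; apply: eq_integral => x _ /=; rewrite /patch /=.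
case: ifPn => xin.
  by rewrite /= (@opprK R).
move: xin; rewrite notin_setE /= in_itv /= andbT => /negP; rewrite -ltNge => x0.
by rewrite Gn.
Qed.

Definition nf (a mu0 t : R) := expR (- (a * (t - mu0) ^+ 2)).

Lemma nf_normal a m : 0 < a ->
  nf a m = normal_fun m (Num.sqrt ((a *+ 2)^-1)).
Proof.
move=> a0; apply/funext => t; rewrite /nf /normal_fun.
rewrite sqr_sqrtr; last by rewrite invr_ge0 mulrn_wge0 // ltW.
congr expR; rewrite !mulr2n; field.
by rewrite gt_eqF // addr_gt0.
Qed.


Lemma nf_integrable a m : 0 < a -> mu.-integrable setT (fun t => (nf a m t)%:E).
Proof.
move=> a0; set s := Num.sqrt ((a *+ 2)^-1).
have s0 : s != 0 by rewrite /s gt_eqF // sqrtr_gt0 invr_gt0 mulrn_wgt0.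
have := integrableZl measurableT (normal_peak s)^-1 (integrable_normal_pdf m s).
apply: eq_integrable => // t _; rewrite normal_pdfE //= -EFinM mulrA mulVf.
  by rewrite mul1r nf_normal.
by rewrite gt_eqF // normal_peak_gt0.
Qed.

Lemma nf_integral a m : 0 < a -> \int[mu]_t (nf a m t) = Num.sqrt (pi / a).
Proof.
move=> a0; set s := Num.sqrt ((a *+ 2)^-1).
have s0 : s != 0 by rewrite /s gt_eqF // sqrtr_gt0 invr_gt0 mulrn_wgt0.
have pk : normal_peak s != 0 by rewrite gt_eqF // normal_peak_gt0.
have -> : nf a m = fun t => (normal_peak s)^-1 * normal_pdf m s t.
  apply/funext => t; rewrite normal_pdfE //= mulrA mulVf // mul1r nf_normal //.
rewrite RintegralZl //; last exact: integrable_normal_pdf.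
rewrite /Rintegral integral_normal_pdf /= mulr1 /normal_peak invrK.
congr Num.sqrt; rewrite /s sqr_sqrtr; last by rewrite invr_ge0 mulrn_wge0 // ltW.
rewrite !mulr2n; field; by rewrite !gt_eqF // addr_gt0.
Qed.


Definition kf (a u : R) := (u + `|u|) / 2 * expR (- (a * u ^+ 2)).

Lemma kf_cont a : continuous (kf a).
Proof.
move=> x; apply: cvgM.
  apply: cvgM; last exact: cvg_cst.
  by apply: cvgD; [exact: cvg_id | exact: norm_continuous].
apply: (cvg_comp _ expR); last exact: continuous_expR.
apply: cvgN; apply: cvgM; first exact: cvg_cst.
exact: exprn_continuous.
Qed.

Lemma kf_ge0 a u : 0 <= kf a u.
Proof.
rewrite /kf mulr_ge0 ?expR_ge0 // divr_ge0 //.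
by have := ler_norm (- u); rewrite normrN; lra.
Qed.

Lemma kf_neg a u : u < 0 -> kf a u = 0.
Proof. by move=> u0; rewrite /kf ltr0_norm // subrr mul0r mul0r. Qed.

Lemma cont_meas (f : R -> R) : continuous f -> measurable_fun setT f.
Proof. exact: measurable_realfun.continuous_measurable_fun. Qed.

Lemma bound_abs a u : 0 < a ->
  `|u| * expR (- (a * u ^+ 2)) <= 2 * (1 + a^-1) * nf (a / 2) 0 u.
Proof.
move=> a0; rewrite /nf subr0.
have -> : - (a * u ^+ 2) = - (a / 2 * u ^+ 2) + - (a / 2 * u ^+ 2).
  by rewrite -opprD; congr (- _); field.
rewrite expRD mulrA ler_pM2r ?expR_gt0 //.
have e := expR_ge1Dx (a / 2 * u ^+ 2).
have h1 : `|u| <= 2 * (1 + a^-1) * (1 + a / 2 * u ^+ 2).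
  have ia : 0 < a^-1 by rewrite invr_gt0.
  have aia : a * a^-1 = 1 by rewrite mulfV // gt_eqF.
  have nu : `|u| ^+ 2 = u ^+ 2 by rewrite real_normK ?num_real.
  have n0 : 0 <= `|u| by [].
  have u2 : 0 <= u ^+ 2 by rewrite sqr_ge0.
  have au : 0 <= a * u ^+ 2 by rewrite mulr_ge0 // ltW.
  have -> : 2 * (1 + a^-1) * (1 + a / 2 * u ^+ 2) = 2 + a * u ^+ 2 + 2 * a^-1 + u ^+ 2.
    by field; rewrite gt_eqF.
  nra.
have h2 : `|u| <= 2 * (1 + a^-1) * expR (a / 2 * u ^+ 2).
  apply: (le_trans h1); rewrite ler_wpM2l //.
  by rewrite mulr_ge0 // addr_ge0 // invr_ge0 ltW.
move: (ler_wpM2r (expR_ge0 (- (a / 2 * u ^+ 2))) h2).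
by move=> H; apply: (le_trans H); rewrite expRN mulfK // gt_eqF // expR_gt0.
Qed.

Lemma integrable_bound a m (f : R -> R) : 0 < a -> measurable_fun setT f ->
  (forall t, `|f t| <= 2 * (1 + a^-1) * nf (a / 2) m t) ->
  mu.-integrable setT (fun t => (f t)%:E).
Proof.
move=> a0 mf fb.
have a2 : 0 < a / 2 by rewrite divr_gt0.
have I := integrableZl measurableT (2 * (1 + a^-1)) (@nf_integrable (a / 2) m a2).
apply: (le_integrable measurableT _ _ I).
- exact/measurable_EFinP.
- move=> t _ /=; rewrite lee_fin (le_trans (fb t)) //.
  exact: ler_norm.
Qed.


Lemma kf_bound a u : 0 < a -> `|kf a u| <= 2 * (1 + a^-1) * nf (a / 2) 0 u.
Proof.
move=> a0; apply: (le_trans _ (bound_abs a u a0)).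
rewrite ger0_norm ?kf_ge0 // /kf ler_wpM2r ?expR_ge0 //.
have := ler_norm u; lra.
Qed.

Lemma cont_shift (G : R -> R) c : continuous G -> continuous (fun t => G (t + c)).
Proof.
move=> cG t; apply: (continuous_comp (f := fun t => t + c)); last exact: cG.
by apply: cvgD; [exact: cvg_id | exact: cvg_cst].
Qed.

Lemma cont_opp (G : R -> R) : continuous G -> continuous (fun t => G (- t)).
Proof.
move=> cG t; apply: (continuous_comp (f := -%R)); [exact: oppr_continuous | exact: cG].
Qed.

Lemma k1_integrable a m : 0 < a -> mu.-integrable setT (fun t => (kf a (t - m))%:E).
Proof.
move=> a0; apply: (@integrable_bound a m) => //.
  by apply: cont_meas; apply: cont_shift; exact: kf_cont.
move=> t; apply: le_trans (kf_bound _ _ a0) _.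
by rewrite /nf !subr0.
Qed.

Lemma k2_integrable a m : 0 < a -> mu.-integrable setT (fun t => (kf a (- (t - m)))%:E).
Proof.
move=> a0; apply: (@integrable_bound a m) => //.
  by apply: cont_meas; apply: (@cont_shift (fun u => kf a (- u))); apply: cont_opp; exact: kf_cont.
move=> t; apply: le_trans (kf_bound _ _ a0) _.
by rewrite /nf !subr0 sqrrN.
Qed.

Lemma odd_zero a m : 0 < a -> \int[mu]_t ((t - m) * nf a m t) = 0.
Proof.
move=> a0.
have E : forall t, (t - m) * nf a m t = kf a (t - m) - kf a (- (t - m)).
  by move=> t; rewrite /kf /nf normrN sqrrN; field.
transitivity (\int[mu]_t (kf a (t - m) - kf a (- (t - m)))).
  by apply: eq_Rintegral => t _; exact: E.
rewrite RintegralB //; last 2 first.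
- exact: k1_integrable.
- exact: k2_integrable.
have S1 := @shift_integral (kf a) (- m) (kf_cont a) (@kf_ge0 a).
have S2 := @shift_integral (fun u => kf a (- u)) (- m) (@cont_opp (kf a) (kf_cont a)) (fun u => kf_ge0 a (- u)).
have S3 := @refl_integral (kf a) (kf_cont a) (@kf_ge0 a) (@kf_neg a).
by rewrite /Rintegral S1 S2 S3 subrr.
Qed.


Lemma intZ (f : R -> R) c : mu.-integrable setT (fun t => (f t)%:E) ->
  mu.-integrable setT (fun t => (c * f t)%:E).
Proof.
move=> If; have := integrableZl measurableT c If.
by apply: eq_integrable => // t _; rewrite EFinM.
Qed.

Lemma h_integrable a m : 0 < a -> mu.-integrable setT (fun t => ((t - m) * nf a m t)%:E).
Proof.
move=> a0; apply: (@integrable_bound a m) => //.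
  apply: measurable_funM; first by apply: measurable_funB.
  rewrite nf_normal //; exact: measurable_normal_fun.
move=> t; rewrite normrM (ger0_norm (expR_ge0 _)).
by apply: le_trans (bound_abs a (t - m) a0) _; rewrite /nf subr0.
Qed.

Lemma L1 a al be B C : 0 < a ->
 \int[mu]_t ((al + be * t) * expR (- (a * t ^+ 2 + B * t + C))) =
 (al - be * B / (2 * a)) * Num.sqrt (pi / a) * expR (B ^+ 2 / (4 * a) - C).
Proof.
move=> a0; set m := - B / (2 * a); set K := expR (B ^+ 2 / (4 * a) - C).
have E : forall t, (al + be * t) * expR (- (a * t ^+ 2 + B * t + C)) =
   K * (al + be * m) * nf a m t + K * be * ((t - m) * nf a m t).
  move=> t; rewrite /nf /K.
  have -> : - (a * t ^+ 2 + B * t + C) = (B ^+ 2 / (4 * a) - C) + - (a * (t - m) ^+ 2).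
    by rewrite /m; field; by rewrite gt_eqF.
  rewrite expRD; ring.
transitivity (\int[mu]_t (K * (al + be * m) * nf a m t + K * be * ((t - m) * nf a m t))).
  by apply: eq_Rintegral => t _; exact: E.
rewrite RintegralD //; last 2 first.
- by apply: intZ; exact: nf_integrable.
- by apply: intZ; exact: h_integrable.
rewrite RintegralZl //; last exact: nf_integrable.
rewrite RintegralZl //; last exact: h_integrable.
rewrite nf_integral // odd_zero // mulr0 addr0 /m.
by field; rewrite gt_eqF.
Qed.



Definition shv (t : R) (w : nat -> R) : nat -> R :=
  fun i => if i == 0%N then t else w i.-1.

Lemma iint_first n (f : (nat -> R) -> R) :
  iint n.+1 f = iint n (fun w => \int[mu]_t f (shv t w)).
Proof.
elim: n f => [|n IH] f; first by [].
rewrite [LHS]/=.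
have -> : (fun t => iint n.+1 (fun v => f (fun i => if i == n.+1 then t else v i)))
   = (fun t => iint n (fun w => \int[mu]_s f (shv s (fun i => if i == n then t else w i)))).
  apply/funext => t; rewrite IH; congr iint; apply/funext => w; congr Rintegral.
  apply/funext => s; congr f; apply/funext => i; rewrite /shv.
  by case: i => [|i] //=.
by [].
Qed.

Definition Qq n (A : nat -> nat -> R) (v : nat -> R) :=
  \sum_(i < n) \sum_(j < n) A i j * v i * v j.
Definition Lf n (b : nat -> R) (v : nat -> R) := \sum_(i < n) b i * v i.
Definition Qf n A b c v := Qq n A v + Lf n b v + c.
Definition Pf n p0 p v := p0 + Lf n p v.
Definition pdn n A := forall v : nat -> R, (exists i : 'I_n, v i != 0) -> 0 < Qq n A v.
Definition center n A (b m : nat -> R) :=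
  forall i : 'I_n, \sum_(j < n) (A i j + A j i) * m j + b i = 0.

Lemma Lf_split n b t w : Lf n.+1 b (shv t w) = b 0%N * t + Lf n (fun i => b i.+1) w.
Proof. by rewrite /Lf big_ord_recl. Qed.

Lemma Lf_recl n b m : Lf n.+1 b m = b 0%N * m 0%N + Lf n (fun i => b i.+1) (fun i => m i.+1).
Proof. by rewrite /Lf big_ord_recl. Qed.

Lemma Qq_split n A t w : Qq n.+1 A (shv t w) =
  A 0%N 0%N * t ^+ 2 + Lf n (fun j => A 0%N j.+1 + A j.+1 0%N) w * t
  + Qq n (fun i j => A i.+1 j.+1) w.
Proof.
rewrite /Qq /Lf.
under eq_bigr do rewrite big_ord_recl.
rewrite big_split /= big_ord_recl [X in _ + X = _]big_ord_recl /=.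
rewrite /shv /bump /=.
under eq_bigr do rewrite add1n /=.
under [X in _ + (X + _) = _]eq_bigr do rewrite add1n /=.
under [X in _ + (_ + X) = _]eq_bigr do (under eq_bigr do rewrite !add1n /=).
rewrite mulr_suml -!addrA; congr (_ + _); first by rewrite expr2 mulrA.
rewrite !addrA; congr (_ + _); rewrite -big_split /=.
by apply: eq_bigr => i _; ring.
Qed.

Lemma LfB n f g w : Lf n (fun i => f i - g i) w = Lf n f w - Lf n g w.
Proof. by rewrite /Lf -sumrB; apply: eq_bigr => i _; ring. Qed.

Lemma LfZ n c k g w : Lf n (fun i => c * g i / k) w = c * Lf n g w / k.
Proof. by rewrite /Lf mulr_sumr mulr_suml; apply: eq_bigr => i _; ring. Qed.

Lemma Lf0 n w : Lf n (fun _ => 0) w = 0.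
Proof. by rewrite /Lf big1 // => i _; rewrite mul0r. Qed.

Lemma QqB n A B w : Qq n (fun i j => A i j - B i j) w = Qq n A w - Qq n B w.
Proof.
rewrite /Qq -sumrB; apply: eq_bigr => i _; rewrite -sumrB.
by apply: eq_bigr => j _; ring.
Qed.

Lemma Qq_rank1 n u k w : Qq n (fun i j => u i * u j / k) w = (Lf n u w) ^+ 2 / k.
Proof.
rewrite /Qq /Lf expr2 mulr_suml mulr_suml; apply: eq_bigr => i _.
rewrite mulr_sumr mulr_suml; apply: eq_bigr => j _; ring.
Qed.

Lemma Qq0 n A : Qq n A (fun _ => 0) = 0.
Proof. by rewrite /Qq big1 // => i _; rewrite big1 // => j _; rewrite !mulr0. Qed.


Definition ua (A : nat -> nat -> R) j := A 0%N j.+1 + A j.+1 0%N.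
Definition Ap A i j := A i.+1 j.+1 - ua A i * ua A j / (4 * A 0%N 0%N).
Definition bp A (b : nat -> R) i := b i.+1 - b 0%N * ua A i / (2 * A 0%N 0%N).
Definition cp A (b : nat -> R) c := c - b 0%N ^+ 2 / (4 * A 0%N 0%N) - ln (Num.sqrt (pi / A 0%N 0%N)).
Definition p0p A (b : nat -> R) p0 (p : nat -> R) := p0 - p 0%N * b 0%N / (2 * A 0%N 0%N).
Definition pp A (p : nat -> R) i := p i.+1 - p 0%N * ua A i / (2 * A 0%N 0%N).

Lemma step_pt n A b c p0 p w : 0 < A 0%N 0%N ->
  \int[mu]_t (Pf n.+1 p0 p (shv t w) * expR (- Qf n.+1 A b c (shv t w))) =
  Pf n (p0p A b p0 p) (pp A p) w * expR (- Qf n (Ap A) (bp A b) (cp A b c) w).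
Proof.
move=> a0; set a := A 0%N 0%N.
set al := Pf n p0 (fun i => p i.+1) w.
set B := Lf n (ua A) w + b 0%N.
set C := Qq n (fun i j => A i.+1 j.+1) w + Lf n (fun i => b i.+1) w + c.
transitivity (\int[mu]_t ((al + p 0%N * t) * expR (- (a * t ^+ 2 + B * t + C)))).
  apply: eq_Rintegral => t _.
  rewrite /Pf /Qf Lf_split Qq_split Lf_split /al /B /C /Pf /ua /a; congr (_ * expR _); ring.
rewrite L1 //.
have EP : Pf n (p0p A b p0 p) (pp A p) w = al - p 0%N * B / (2 * a).
  rewrite /Pf /pp LfB LfZ /p0p /al /B /Pf -/a; field; by rewrite gt_eqF.
have EQ : - Qf n (Ap A) (bp A b) (cp A b c) w = (B ^+ 2 / (4 * a) - C) + ln (Num.sqrt (pi / a)).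
  rewrite /Qf /Ap QqB Qq_rank1 /bp LfB LfZ /cp /B /C -/a; field; by rewrite gt_eqF.
rewrite EP EQ [in RHS]expRD lnK; first by ring.
by rewrite posrE sqrtr_gt0 divr_gt0 // pi_gt0.
Qed.


Lemma sum_recl n (F : nat -> R) : \sum_(j < n.+1) F j = F 0%N + \sum_(j < n) F j.+1.
Proof. by rewrite big_ord_recl. Qed.

Lemma Lf0v n f : Lf n f (fun _ => 0) = 0.
Proof. by rewrite /Lf big1 // => i _; rewrite mulr0. Qed.

Lemma pd_a {n A} : pdn n.+1 A -> 0 < A 0%N 0%N.
Proof.
move=> pd; have := pd (shv 1 (fun _ => 0)).
rewrite Qq_split Lf0v Qq0 expr1n mulr1 mul0r !addr0; apply.
by exists ord0; rewrite /shv /= oner_neq0.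
Qed.

Lemma pd_step {n A} : pdn n.+1 A -> pdn n (Ap A).
Proof.
move=> pd w [i wi]; have a0 := pd_a pd.
set L := Lf n (ua A) w; set t := - L / (2 * A 0%N 0%N).
have := pd (shv t w); rewrite Qq_split -/L /Ap QqB Qq_rank1 -/L.
have -> : A 0%N 0%N * t ^+ 2 + L * t = - (L ^+ 2 / (4 * A 0%N 0%N)).
  by rewrite /t; field; rewrite gt_eqF.
rewrite addrC; apply; exists (lift ord0 i); by rewrite /shv /=.
Qed.

Lemma center_step {n A b m} : 0 < A 0%N 0%N -> center n.+1 A b m ->
  center n (Ap A) (bp A b) (fun i => m i.+1).
Proof.
move=> a0 cm i.
have c0 : (A 0%N 0%N + A 0%N 0%N) * m 0%N + \sum_(j < n) (A 0%N j.+1 + A j.+1 0%N) * m j.+1 + b 0%N = 0.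
  by move: (cm ord0); rewrite big_ord_recl => h; exact: h.
have ci : (A i.+1 0%N + A 0%N i.+1) * m 0%N + \sum_(j < n) (A i.+1 j.+1 + A j.+1 i.+1) * m j.+1 + b i.+1 = 0.
  by move: (cm (lift ord0 i)); rewrite big_ord_recl => h; exact: h.
have -> : \sum_(j < n) (Ap A i j + Ap A j i) * m j.+1 =
   \sum_(j < n) (A i.+1 j.+1 + A j.+1 i.+1) * m j.+1 - ua A i * Lf n (ua A) (fun k => m k.+1) / (2 * A 0%N 0%N).
  rewrite /Lf mulr_sumr mulr_suml -sumrB; apply: eq_bigr => j _; rewrite /Ap.
  by field; rewrite gt_eqF.
set S := \sum_(j < n) (A i.+1 j.+1 + A j.+1 i.+1) * m j.+1.
set L := Lf n (ua A) (fun k => m k.+1).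
have eL : L = - (2 * A 0%N 0%N * m 0%N) - b 0%N.
  apply/eqP; rewrite -subr_eq0; apply/eqP; rewrite -c0 /L /Lf; ring.
have eS : S = - (ua A i * m 0%N) - b i.+1.
  apply/eqP; rewrite -subr_eq0; apply/eqP; rewrite -ci /S /ua; ring.
rewrite eL eS /bp; field; by rewrite gt_eqF.
Qed.

Lemma Pf_step n A b m p0 p : 0 < A 0%N 0%N -> center n.+1 A b m ->
  Pf n (p0p A b p0 p) (pp A p) (fun i => m i.+1) = Pf n.+1 p0 p m.
Proof.
move=> a0 cm.
have c0 : (A 0%N 0%N + A 0%N 0%N) * m 0%N + \sum_(j < n) (A 0%N j.+1 + A j.+1 0%N) * m j.+1 + b 0%N = 0.
  by move: (cm ord0); rewrite big_ord_recl => h; exact: h.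
rewrite /Pf Lf_recl /pp LfB LfZ /p0p.
set L := Lf n (ua A) (fun k => m k.+1).
have eL : L = - (2 * A 0%N 0%N * m 0%N) - b 0%N.
  apply/eqP; rewrite -subr_eq0; apply/eqP; rewrite -c0 /L /Lf; ring.
rewrite eL; field; by rewrite gt_eqF.
Qed.

Lemma gauss_main n : forall A b c m, pdn n A -> center n A b m ->
  0 < iint n (fun v => expR (- Qf n A b c v)) /\
  forall p0 p, iint n (fun v => Pf n p0 p v * expR (- Qf n A b c v)) =
     Pf n p0 p m * iint n (fun v => expR (- Qf n A b c v)).
Proof.
elim: n => [|n IH] A b c m pd cm.
  rewrite /= /Qf /Pf /Qq /Lf !big_ord0 !addr0 !add0r; split; first exact: expR_gt0.
  by move=> p0 p; rewrite !big_ord0.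
have a0 := pd_a pd.
have E1 : forall p0 p, iint n.+1 (fun v => Pf n.+1 p0 p v * expR (- Qf n.+1 A b c v)) =
  iint n (fun w => Pf n (p0p A b p0 p) (pp A p) w * expR (- Qf n (Ap A) (bp A b) (cp A b c) w)).
  by move=> p0 p; rewrite iint_first; congr iint; apply/funext => w; exact: step_pt.
have E0 : iint n.+1 (fun v => expR (- Qf n.+1 A b c v)) =
   iint n.+1 (fun v => Pf n.+1 1 (fun _ => 0) v * expR (- Qf n.+1 A b c v)).
  by congr iint; apply/funext => v; rewrite /Pf /Lf big1 ?addr0 ?mul1r // => i _; rewrite mul0r.
have [IH1 IH2] := IH (Ap A) (bp A b) (cp A b c) (fun i => m i.+1) (pd_step pd) (center_step a0 cm).
have P1 : Pf n.+1 1 (fun _ => 0) m = 1.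
  by rewrite /Pf /Lf big1 ?addr0 // => i _; rewrite mul0r.
split.
  by rewrite E0 E1 IH2 Pf_step // P1 mul1r.
move=> p0 p; rewrite E1 IH2 Pf_step // [in RHS]E0 E1 IH2 Pf_step // P1 mul1r.
by [].
Qed.

End G4.


Section G6.
Variable R : realType.

Definition dot n (u v : 'cV[R]_n) := \sum_(i < n) u i 0 * v i 0.
Arguments dot {n}.

Lemma dotE n (u v : 'cV[R]_n) : (u^T *m v) 0 0 = dot u v.
Proof. by rewrite mxE /dot; apply: eq_bigr => i _; rewrite mxE. Qed.

Lemma quadE n (A : 'M[R]_n) (x : 'cV[R]_n) : (x^T *m A *m x) 0 0 = dot x (A *m x).
Proof. by rewrite -mulmxA dotE. Qed.

Lemma dot_gt0 n (x : 'cV[R]_n) : x != 0 -> 0 < dot x x.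
Proof.
move=> x0.
have [i xi] : exists i, x i 0 != 0.
  apply: contra_notP (negP x0) => H; apply/eqP/matrixP => i j.
  rewrite ord1 mxE; apply/eqP/negPn/negP => h; apply: H; by exists i.
rewrite /dot (bigD1 i) //=.
have h1 : 0 < x i 0 * x i 0 by rewrite lt_neqAle eq_sym mulf_neq0 //= -expr2 sqr_ge0.
have h2 : 0 <= \sum_(j < n | j != i) x j 0 * x j 0.
  by apply: sumr_ge0 => j _; rewrite -expr2 sqr_ge0.
lra.
Qed.

Lemma dot_ge0 n (x : 'cV[R]_n) : 0 <= dot x x.
Proof. by apply: sumr_ge0 => j _; rewrite -expr2 sqr_ge0. Qed.

Lemma dotDl n (u w v : 'cV[R]_n) : dot (u + w) v = dot u v + dot w v.
Proof. by rewrite /dot -big_split; apply: eq_bigr => i _; rewrite mxE mulrDl. Qed.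
Lemma dotDr n (u w v : 'cV[R]_n) : dot v (u + w) = dot v u + dot v w.
Proof. by rewrite /dot -big_split; apply: eq_bigr => i _; rewrite mxE mulrDr. Qed.
Lemma dotZl n c (u v : 'cV[R]_n) : dot (c *: u) v = c * dot u v.
Proof. by rewrite /dot mulr_sumr; apply: eq_bigr => i _; rewrite mxE mulrA. Qed.
Lemma dotZr n c (u v : 'cV[R]_n) : dot v (c *: u) = c * dot v u.
Proof. by rewrite /dot mulr_sumr; apply: eq_bigr => i _; rewrite mxE mulrCA. Qed.
Lemma dotNl n (u v : 'cV[R]_n) : dot (- u) v = - dot u v.
Proof. by rewrite -scaleN1r dotZl mulN1r. Qed.
Lemma dotNr n (u v : 'cV[R]_n) : dot v (- u) = - dot v u.
Proof. by rewrite -scaleN1r dotZr mulN1r. Qed.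
Lemma dotC n (u v : 'cV[R]_n) : dot u v = dot v u.
Proof. by rewrite /dot; apply: eq_bigr => i _; rewrite mulrC. Qed.

Lemma dot_sym n (A : 'M[R]_n) (u v : 'cV[R]_n) : A^T = A ->
  dot u (A *m v) = dot (A *m u) v.
Proof.
move=> hA; rewrite /dot.
under eq_bigr do rewrite mxE mulr_sumr.
under [RHS]eq_bigr do rewrite mxE mulr_suml.
rewrite exchange_big /=; apply: eq_bigr => i _; apply: eq_bigr => j _.
have := congr1 (fun B : 'M[R]_n => B i j) hA; rewrite mxE => <-; ring.
Qed.

Lemma pd_unit n (A : 'M[R]_n) :
  (forall x : 'cV[R]_n, x != 0 -> 0 < (x^T *m A *m x) 0 0) -> A \in unitmx.
Proof.
move=> pd; rewrite -row_free_unit; apply/negPn/negP => nrf.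
have kA : kermx A != 0 by rewrite kermx_eq0.
have [i Hi] : exists i, row i (kermx A) != 0.
  apply: contra_notP (negP kA) => H; apply/eqP/row_matrixP => i; rewrite row0.
  apply/eqP/negPn/negP => h; apply: H; by exists i.
have := pd (row i (kermx A))^T; rewrite trmx_eq0 => /(_ Hi).
by rewrite trmxK -row_mul mulmx_ker row0 mul0mx mxE ltxx.
Qed.

Lemma quad_comb n (S : 'M[R]_n) (x : 'cV[R]_n) t :
  (x^T *m (t *: 1%:M + (1 - t) *: S) *m x) 0 0 = t * dot x x + (1 - t) * (x^T *m S *m x) 0 0.
Proof.
rewrite mulmxDr mulmxDl -!scalemxAr -!scalemxAl mulmx1 !mxE.
congr (_ * _ + _); rewrite /dot; apply: eq_bigr => j _; by rewrite mxE.
Qed.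

Lemma pd_det_gt0 n (S : 'M[R]_n) :
  (forall x : 'cV[R]_n, x != 0 -> 0 < (x^T *m S *m x) 0 0) -> 0 < \det S.
Proof.
move=> pd.
pose q : {poly R} := \det (\matrix_(i, j) ('X * ((1%:M : 'M[R]_n) i j)%:P + (1 - 'X) * (S i j)%:P)).
have qt : forall t, q.[t] = \det (t *: 1%:M + (1 - t) *: S).
  move=> t; rewrite -horner_evalE /q -det_map_mx; apply: f_equal.
  by apply/matrixP => i j; rewrite !mxE /= horner_evalE !hornerE.
have pdt : forall t, 0 <= t <= 1 -> q.[t] != 0.
  move=> t /andP[t0 t1]; rewrite qt -unitfE -unitmxE; apply: pd_unit => x x0.
  rewrite quad_comb; have dx := @dot_gt0 n x x0; have sx := pd x x0.
  case: (eqVneq t 0) => [->|tn0]; first by rewrite mul0r add0r subr0 mul1r.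
  have tp : 0 < t by rewrite lt_neqAle eq_sym tn0.
  apply: (lt_le_trans (mulr_gt0 tp dx)); rewrite lerDl mulr_ge0 // ?subr_ge0 // ltW //.
rewrite ltNge; apply/negP => dS.
have q0 : q.[0] <= 0 by rewrite qt scale0r add0r subr0 scale1r.
have q1 : 0 <= q.[1] by rewrite qt subrr scale0r addr0 scale1r det1.
have [x /andP [x0 x1] rx] := @poly_ivt R q 0 1 ler01 (introT andP (conj q0 q1)).
move: (pdt x); rewrite x0 x1 /= => /(_ isT); by rewrite (rootP rx) eqxx.
Qed.

End G6.


Arguments Qq {R}. Arguments Lf {R}. Arguments Qf {R}. Arguments Pf {R}. Arguments pdn {R}. Arguments center {R}. Arguments dot {R n}. Arguments dotC {R n}. Arguments dot_gt0 {R n}. Arguments dot_sym {R n}.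
Section G7.
Variable R : realType.
Variable d : nat.

Definition ext (A : 'M[R]_d) : nat -> nat -> R := fun i j =>
  match (insub i : option 'I_d), (insub j : option 'I_d) with
  | Some i', Some j' => A i' j' | _, _ => 0 end.
Definition vext (x : 'cV[R]_d) : nat -> R := fun i =>
  match (insub i : option 'I_d) with Some i' => x i' 0 | None => 0 end.
Definition colv (v : nat -> R) : 'cV[R]_d := \col_(i < d) v (nat_of_ord i).

Lemma ext_ord A (i j : 'I_d) : ext A i j = A i j.
Proof. by rewrite /ext !valK. Qed.
Lemma vext_ord x (i : 'I_d) : vext x i = x i 0.
Proof. by rewrite /vext valK. Qed.

Lemma Qq_ext A v : Qq d (ext A) v = dot (colv v) (A *m colv v).
Proof.
rewrite /Qq /dot; apply: congr_big => // i _.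
rewrite !mxE mulr_sumr; apply: eq_bigr => j _ /=; rewrite ext_ord mxE; ring.
Qed.

Lemma Lf_ext b v : Lf d (vext b) v = dot b (colv v).
Proof. by rewrite /Lf /dot; apply: eq_bigr => i _; rewrite vext_ord mxE. Qed.

Lemma center_ext A bb m : (A + A^T) *m m + bb = 0 -> center d (ext A) (vext bb) (vext m).
Proof.
move=> h i; have H := congr1 (fun B : 'cV[R]_d => B i 0) h; rewrite !mxE in H.
apply: (etrans _ H); rewrite vext_ord; congr (_ + _); apply: eq_bigr => j _.
by rewrite !ext_ord vext_ord !mxE.
Qed.

Definition delta (i : 'I_d) : nat -> R := fun j => if j == nat_of_ord i then 1 else 0.

Lemma Pf_delta i w : Pf d 0 (delta i) w = w i.
Proof.
rewrite /Pf /Lf add0r (bigD1 i) //= big1 ?addr0 /delta ?eqxx ?mul1r //.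
by move=> j ji; rewrite ifF ?mul0r //; apply/negbTE.
Qed.


Definition gd (K1 : R) (M : 'M[R]_d) (x : 'cV[R]_d) : R :=
  K1 * expR (- (x^T *m M *m x) 0 0 / 2).

Lemma sqnormE (x : 'cV[R]_d) : sqnorm x = dot x x.
Proof. by rewrite /sqnorm /dot; apply: eq_bigr => i _; rewrite expr2. Qed.

Lemma MMSE_gauss K1 M sig z m : 0 < K1 -> M^T = M ->
  (forall x : 'cV[R]_d, x != 0 -> 0 < dot x (M *m x)) -> 0 < sig ->
  M *m m + (sig ^+ 2)^-1 *: m = (sig ^+ 2)^-1 *: z -> MMSE (gd K1 M) sig z = m.
Proof.
move=> K0 hM pdM s0 hm.
have sn0 : sig ^+ 2 != 0 by rewrite gt_eqF // exprn_gt0.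
set s := (sig ^+ 2)^-1.
set As := 2^-1 *: M + (2 * sig ^+ 2)^-1 *: (1%:M : 'M[R]_d).
set bs := - (s *: z).
set K2 := (Num.sqrt ((2 * pi * sig ^+ 2) ^+ d))^-1.
set cs := dot z z / (2 * sig ^+ 2) - ln (K1 * K2).
have K2p : 0 < K2.
  by rewrite invr_gt0 sqrtr_gt0 exprn_gt0 // mulr_gt0 ?exprn_gt0 // mulr_gt0 // pi_gt0.
have quadAs : forall x, dot x (As *m x) = 2^-1 * dot x (M *m x) + (2 * sig ^+ 2)^-1 * dot x x.
  by move=> x; rewrite mulmxDl -!scalemxAl mul1mx dotDr !dotZr.
have pt : forall v, gd K1 M (colv v) * noise_density sig (z - colv v) =
                    expR (- Qf d (ext As) (vext bs) cs v).
  move=> v; set x := colv v.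
  rewrite /Qf Qq_ext Lf_ext -/x quadAs /gd /noise_density quadE.
  have -> : sqnorm (z - x) = dot z z - 2 * dot z x + dot x x.
    by rewrite sqnormE dotDl !dotDr !dotNl !dotNr (dotC x z); ring.
  rewrite /bs dotNl dotZl /cs.
  have E : - (2^-1 * dot x (M *m x) + (2 * sig ^+ 2)^-1 * dot x x + - (s * dot z x) +
              (dot z z / (2 * sig ^+ 2) - ln (K1 * K2)))
     = (- dot x (M *m x) / 2) + (- (dot z z - 2 * dot z x + dot x x) / (2 * sig ^+ 2))
       + ln (K1 * K2).
    by rewrite /s; field; rewrite gt_eqF.
  rewrite E !expRD lnK ?posrE ?mulr_gt0 //; rewrite /K2; ring.
have pdA : pdn d (ext As).
  move=> v [i vi]; rewrite Qq_ext quadAs.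
  have x0 : colv v != 0.
    apply/negP => /eqP h; have := congr1 (fun B : 'cV[R]_d => B i 0) h.
    by rewrite !mxE => h'; rewrite h' eqxx in vi.
  have h1 := pdM _ x0; have h2 := dot_gt0 _ x0.
  by rewrite addr_gt0 // mulr_gt0 // invr_gt0 // mulr_gt0 // exprn_gt0.
have cA : center d (ext As) (vext bs) (vext m).
  apply: center_ext.
  have -> : As + As^T = M + s *: 1%:M.
    apply/matrixP => i j; rewrite !mxE (eq_sym j i).
    have := congr1 (fun B : 'M[R]_d => B i j) hM; rewrite mxE => ->.
    by rewrite /s; field; rewrite gt_eqF.
  by rewrite mulmxDl -scalemxAl mul1mx hm /bs subrr.
have [Dp HN] := @gauss_main R d _ _ cs _ pdA cA.
apply/matrixP => i j; rewrite ord1 mxE {j}.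
have ED : intRd (fun x => gd K1 M x * noise_density sig (z - x)) =
          iint d (fun v => expR (- Qf d (ext As) (vext bs) cs v)).
  by rewrite /intRd; congr iint; apply/funext => v; exact: pt.
have EN : intRd (fun x => x i 0 * gd K1 M x * noise_density sig (z - x)) =
          iint d (fun v => Pf d 0 (delta i) v * expR (- Qf d (ext As) (vext bs) cs v)).
  by rewrite /intRd; congr iint; apply/funext => v; rewrite Pf_delta -(pt v) mxE mulrA.
by rewrite ED EN HN Pf_delta vext_ord mulfK // gt_eqF.
Qed.


Lemma prox_gauss K1 M tau y P : 0 < K1 -> M^T = M ->
  (forall x : 'cV[R]_d, 0 <= dot x (M *m x)) -> 0 < tau ->
  P + tau *: (M *m P) = y -> prox_neglog (gd K1 M) tau y = P.
Proof.
move=> K0 hM psd t0 hP.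
pose f x := sqnorm (y - x) / 2 - tau * ln (gd K1 M x).
have lnE : forall x, ln (gd K1 M x) = ln K1 - dot x (M *m x) / 2.
  by move=> x; rewrite /gd lnM ?posrE ?expR_gt0 // expRK quadE mulNr.
have fE : forall e, f (P + e) = f P + (dot e e + tau * dot e (M *m e)) / 2.
  move=> e; rewrite /f !lnE !sqnormE -hP.
  have -> : P + tau *: (M *m P) - (P + e) = tau *: (M *m P) - e.
    by apply/matrixP => i j; rewrite !mxE; ring.
  have -> : P + tau *: (M *m P) - P = tau *: (M *m P).
    by apply/matrixP => i j; rewrite !mxE; ring.
  rewrite mulmxDr !dotDl !dotDr !dotNl !dotNr !dotZl !dotZr (dot_sym M P e hM) (dotC (M *m P) e).
  ring.
have key : forall x, (forall x', f x <= f x') -> x = P.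
  move=> x hx; have := hx P.
  have Ex : x = P + (x - P) by rewrite addrC subrK.
  have := fE (x - P); rewrite -Ex => ->.
  rewrite gerDl => h.
  apply/eqP; rewrite -subr_eq0; apply/negPn/negP => ne.
  have h1 := dot_gt0 _ ne; have h2 := mulr_ge0 (ltW t0) (psd (x - P)).
  have : 0 < (dot (x - P) (x - P) + tau * dot (x - P) (M *m (x - P))) / 2.
    by rewrite divr_gt0 // ltr_wpDr.
  by rewrite ltNge h.
have hPmin : forall x', f P <= f x'.
  move=> x'; have Ex : x' = P + (x' - P) by rewrite addrC subrK.
  rewrite Ex fE lerDl divr_ge0 // addr_ge0 ?dot_ge0 // mulr_ge0 // ltW //.
have HX := xgetPex 0 (ex_intro (fun x => forall x', f x <= f x') P hPmin).
exact: (key _ HX).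
Qed.

End G7.

Arguments gd {R d}. Arguments prox_gauss {R d}. Arguments MMSE_gauss {R d}. Arguments quadE {R n}. Arguments dot {R n}. Arguments dotC {R n}. Arguments dot_gt0 {R n}. Arguments dot_sym {R n}. Arguments pd_unit {R n A}. Arguments pd_det_gt0 {R n S}.

Theorem proposition5 (R : realType) (d : nat) (Sigma : 'M[R]_d)
  (hS : posdef Sigma) (tau : R) (htau : 0 < tau) (y : 'cV[R]_d) :
  forall k : nat,
    xseq (gauss_density Sigma) tau y k - prox_neglog (gauss_density Sigma) tau y
    = (k.+1%:R)^-1 *: (y - prox_neglog (gauss_density Sigma) tau y).
Proof.
case: hS => hSs hSpd.
set M := invmx Sigma.
have Su : Sigma \in unitmx := pd_unit hSpd.
have hM : M^T = M by rewrite /M trmx_inv hSs.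
have pdM : forall x : 'cV[R]_d, x != 0 -> 0 < dot x (M *m x).
  move=> x x0; set w := M *m x.
  have e1 : x = Sigma *m w by rewrite /w /M mulmxA mulmxV // mul1mx.
  have w0 : w != 0 by apply: contraNneq x0 => h; rewrite e1 h mulmx0.
  by rewrite {1}e1 dotC -quadE; exact: hSpd.
have psdM : forall x : 'cV[R]_d, 0 <= dot x (M *m x).
  move=> x; case: (eqVneq x 0) => [->|x0]; last exact: ltW (pdM x x0).
  by rewrite /dot big1 // => i _; rewrite mxE mul0r.
have detp := pd_det_gt0 hSpd.
set K1 := (Num.sqrt ((2 * pi) ^+ d * \det Sigma))^-1.
have K0 : 0 < K1.
  by rewrite invr_gt0 sqrtr_gt0 mulr_gt0 // exprn_gt0 // mulr_gt0 // pi_gt0.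
have gdE : gauss_density Sigma = gd K1 M by [].
set T := 1%:M + tau *: M.
have Tu : T \in unitmx.
  apply: pd_unit => x x0; rewrite quadE /T mulmxDl mul1mx -scalemxAl dotDr dotZr.
  have h1 := dot_gt0 _ x0; have h2 := mulr_ge0 (ltW htau) (psdM x).
  by rewrite ltr_wpDr.
set P := invmx T *m y.
have hP : P + tau *: (M *m P) = y.
  have : T *m P = y by rewrite /P mulmxA mulmxV // mul1mx.
  by rewrite /T mulmxDl mul1mx -scalemxAl.
have prox : prox_neglog (gauss_density Sigma) tau y = P.
  by rewrite gdE; exact: prox_gauss.
rewrite prox gdE.
have MP : M *m P = tau^-1 *: (y - P).
  by rewrite -hP [P + _]addrC addrK scalerA mulVf ?scale1r // gt_eqF.
have claim : forall k, xseq (gd K1 M) tau y k = P + (k.+1%:R)^-1 *: (y - P).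
  elim => [|k IH].
    by apply/matrixP => i j; rewrite /= !mxE invr1 mul1r; ring.
  rewrite /= IH.
  have sk : 0 < sigma_k tau k by rewrite /sigma_k sqrtr_gt0 divr_gt0 // ltr0Sn.
  have sk2 : sigma_k tau k ^+ 2 = tau / k.+1%:R.
    by rewrite /sigma_k sqr_sqrtr // divr_ge0 // ltW.
  have n0 : (k.+1%:R : R) != 0 by rewrite pnatr_eq0.
  have t0 : tau != 0 by rewrite gt_eqF.
  rewrite (@MMSE_gauss R d K1 M _ _ P K0 hM pdM sk); last first.
    rewrite sk2 MP; apply/matrixP => i j; rewrite !mxE; field.
    by rewrite t0 andbT -mulrS pnatr_eq0.
  have e2 : (k.+2%:R : R) = k.+1%:R + 1 by rewrite [in LHS]mulrSr.
  have n1 : (k.+1%:R + 1 : R) != 0 by rewrite -e2 pnatr_eq0.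
  rewrite /alpha e2; apply/matrixP => i j; rewrite !mxE; field.
  by rewrite -mulrS.
move=> k; rewrite claim; apply/matrixP => i j; rewrite !mxE; ring.
Qed.
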